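(* Let $k \geq 2$ be an integer. (i) For all $k$-admissible integers $n > 1$ such that $n \not\equiv 1 \pmod{k}$, there is a partial $k$-star design of order $n$ with $2\lfloor \frac{n-2}{k}\rfloor$ stars that is not completable. (ii) For all $k$-admissible integers $n > 1$ such that $n \equiv 1 \pmod{k}$, there is a partial $k$-star design of order $n$ with $\frac{2n-2}{k}-1$ stars that is not completable.
   Context: A $k$-star is a copy of $K_{1,k}$. A partial $k$-star design of order $n$ is a pair $(V,\mathcal{A})$ where $V$ is a set of $n$ vertices and $\mathcal{A}$ is a set of edge-disjoint $k$-stars that are subgraphs of the complete graph $K_V$; if every edge of $K_V$ lies in some star of $\mathcal{A}$ it is a $k$-star design. It is completable if there is a $k$-star design $(V,\mathcal{B})$ with $\mathcal{A}\subseteq\mathcal{B}$. A positive integer $n$ is $k$-admissible if $\binom{n}{2}\equiv 0 \pmod{k}$. *)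

(* Defs.v *)
From mathcomp Require Import all_boot.
Set Implicit Arguments. Unset Strict Implicit. Unset Printing Implicit Defensive.

(* A star is represented by (center, set of leaves); its edge set is
   { {c,l} | l in leaves }.  Since k >= 2, a k-star subgraph determines
   its center and leaves uniquely, so this representation is faithful. *)
Definition star (n : nat) := ('I_n * {set 'I_n})%type.

Definition star_edges (n : nat) (s : star n) : {set {set 'I_n}} :=
  [set [set s.1; l] | l in s.2].

Definition is_kstar (n k : nat) (s : star n) : bool :=
  (#|s.2| == k) && (s.1 \notin s.2).

Definition partial_kstar_design (n k : nat) (A : {set star n}) : Prop :=
  (forall s, s \in A -> is_kstar k s) /\
  (forall s t, s \in A -> t \in A -> s != t ->
     [disjoint star_edges s & star_edges t]).

Definition kstar_design (n k : nat) (B : {set star n}) : Prop :=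
  partial_kstar_design k B /\
  (forall x y : 'I_n, x != y -> exists2 s, s \in B & [set x; y] \in star_edges s).

Definition completable (n k : nat) (A : {set star n}) : Prop :=
  exists B : {set star n}, A \subset B /\ kstar_design k B.

Definition k_admissible (k n : nat) : bool := 'C(n, 2) %% k == 0.

(* Main.v *)
Require Import Defs.
From mathcomp Require Import all_boot.
From mathcomp Require Import zify.
Set Implicit Arguments. Unset Strict Implicit. Unset Printing Implicit Defensive.

Lemma set2_eq {T : finType} {a b c d : T} :
  [set a; b] = [set c; d] -> (a = c /\ b = d) \/ (a = d /\ b = c).
Proof.
move=> E.
have /set2P ha : a \in [set c; d] by rewrite -E set21.
have /set2P hb : b \in [set c; d] by rewrite -E set22.
have /set2P hc : c \in [set a; b] by rewrite E set21.
have /set2P hd : d \in [set a; b] by rewrite E set22.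
by case: ha => ea; case: hb => eb; case: hc => ec; case: hd => ed; subst; auto.
Qed.

Lemma disj_star n (s t : star n) :
  (s.1 = t.1 -> [disjoint s.2 & t.2]) -> ~ (s.1 \in t.2 /\ t.1 \in s.2) ->
  [disjoint star_edges s & star_edges t].
Proof.
move=> H1 H2; rewrite disjoint_subset; apply/subsetP => e /imsetP [l ls ->].
rewrite inE; apply/negP => /imsetP [l' lt' E].
case: (set2_eq E) => [[e1 e2]|[e1 e2]].
- by move: (disjointFr (H1 e1) ls); rewrite e2 lt'.
- by apply: H2; rewrite e1 -e2.
Qed.

Definition free_at n (A : {set star n}) (c : 'I_n) : {set 'I_n} :=
  [set l | (l != c) && ~~ [exists s in A, [set c; l] \in star_edges s]].

Lemma key n k (A : {set star n}) (u v : 'I_n) :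
  u != v -> (forall s, s \in A -> [set u; v] \notin star_edges s) ->
  #|free_at A u| < k -> #|free_at A v| < k -> ~ completable k A.
Proof.
move=> uv ncov Fu Fv [B [sAB [[kB dB] covB]]].
have [s sB Es] := covB u v uv.
have /imsetP [l ls El] := Es.
have sA : s \notin A by apply/negP => sA; move: (ncov s sA); rewrite Es.
have sub : s.2 \subset free_at A s.1.
  apply/subsetP => l' l's; rewrite inE; apply/andP; split.
  - apply/eqP => e; move: (kB s sB) => /andP [_ nin]; by rewrite -e l's in nin.
  - apply/existsP => [[t /andP [tA et]]].
    have tB := subsetP sAB t tA.
    have st : s != t by apply: contraNneq sA => ->.
    have es : [set s.1; l'] \in star_edges s by apply/imsetP; exists l'.
    by have := disjointFr (dB s t sB tB st) es; rewrite et.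
have kk : #|s.2| = k by move: (kB s sB) => /andP [/eqP].
have : k <= #|free_at A s.1| by rewrite -kk subset_leq_card.
case: (set2_eq El) => [[<- _]|[_ <-]]; by rewrite leqNgt ?Fu ?Fv.
Qed.

Definition seg n (a len : nat) : {set 'I_n} := [set x : 'I_n | a <= x < a + len].

Lemma card_seg n a len : a + len <= n -> #|seg n a len| = len.
Proof.
case: n => [|n] h.
  have -> : len = 0 by lia.
  apply/eqP; rewrite -leqn0; apply: leq_trans (max_card _) _; by rewrite card_ord.
have -> : seg n.+1 a len = [set insubd ord0 (a + val y) | y : 'I_len].
  apply/setP => x; rewrite inE; apply/idP/imsetP.
  - move=> /andP [h1 h2]; have hy : x - a < len by lia.
    exists (Ordinal hy) => //; apply: val_inj; rewrite val_insubd /=.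
    have -> : a + (x - a) = x by lia.
    by rewrite ltn_ord.
  - move=> [y _ ->]; rewrite val_insubd.
    have -> : a + y < n.+1 by have := ltn_ord y; lia.
    rewrite /=; have := ltn_ord y; lia.
rewrite card_imset ?card_ord //.
move=> y y' /(congr1 val); rewrite !val_insubd.
have -> : a + y < n.+1 by have := ltn_ord y; lia.
have -> : a + y' < n.+1 by have := ltn_ord y'; lia.
move=> /= e; apply: val_inj => /=; lia.
Qed.

Lemma card_segD1 n a len (c : 'I_n) : a + len <= n -> a <= c < a + len ->
  #|seg n a len :\ c| = len - 1.
Proof.
move=> h hc; have := cardsD1 c (seg n a len).
by rewrite card_seg // inE hc /= => e; rewrite {2}e add1n subn1.
Qed.

Lemma seg_idx p k i l : 0 < k -> p + i * k <= l < p + i * k + k -> (l - p) %/ k = i.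
Proof.
move=> k0 h.
have -> : l - p = i * k + (l - p - i * k) by lia.
by rewrite divnMDl // divn_small ?addn0 //; lia.
Qed.

Section Blocks.
Variables (n p k q : nat) (u v : 'I_n).
Hypotheses (k0 : 0 < k) (hu : val u = 0) (hv : val v = 1) (p2 : 2 <= p)
  (hn : p + q * k = n).

Definition bf (bi : bool * 'I_q) : star n :=
  ((if bi.1 then v else u), seg n (p + bi.2 * k) k).

Definition blocks : {set star n} := bf @: [set: bool * 'I_q].

Lemma seg_in_blk (i : 'I_q) : p + i * k + k <= n.
Proof.
have := ltn_ord i => hi; rewrite -hn -addnA leq_add2l -mulSnr leq_mul2r.
by rewrite hi orbT.
Qed.

Lemma bf_inj : injective bf.
Proof.
move=> [b i] [b' j] [e1 e2].
have hb : b = b'.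
  by case: b b' e1 {e2} => [] [] // /(congr1 val); rewrite hu hv.
subst b'; congr pair.
have hlt : p + i * k < n by have := seg_in_blk i; lia.
have : Ordinal hlt \in seg n (p + j * k) k.
  by rewrite -e2 inE /= leqnn /=; lia.
rewrite inE => hj.
have := seg_idx k0 hj; rewrite -addnBAC // subnn add0n mulnK // => e.
by apply: val_inj.
Qed.

Lemma card_blocks : #|blocks| = 2 * q.
Proof. by rewrite card_imset ?cardsT ?card_prod ?card_bool ?card_ord //; exact: bf_inj. Qed.

Lemma blocks_center s : s \in blocks -> s.1 = u \/ s.1 = v.
Proof. by move=> /imsetP [[b i] _ ->] /=; case: b; auto. Qed.

Lemma blocks_leaves s l : s \in blocks -> l \in s.2 -> p <= l.
Proof. by move=> /imsetP [[b i] _ ->] /=; rewrite inE => /andP [h _]; lia. Qed.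

Lemma blocks_kstar s : s \in blocks -> is_kstar k s.
Proof.
move=> sb; have := sb => /imsetP [[b i] _ E].
apply/andP; split; first by rewrite E /= card_seg // seg_in_blk.
apply/negP => h; have := blocks_leaves sb h.
by case: (blocks_center sb) => ->; rewrite ?hu ?hv; lia.
Qed.

Lemma blocks_disj s t : s \in blocks -> t \in blocks -> s != t ->
  [disjoint star_edges s & star_edges t].
Proof.
move=> sb tb st; apply: disj_star.
- move: sb tb st => /imsetP [[b i] _ ->] /imsetP [[b' j] _ ->] /= st e.
  have hb : b = b'.
    by case: b b' e {st} => [] [] // /(congr1 val); rewrite hu hv.
  subst b'.
  rewrite disjoint_subset; apply/subsetP => l; rewrite !inE => /andP [h1 h2].
  apply/negP => /andP [h3 h4].
  have ei := seg_idx k0 (introT andP (conj h1 h2)).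
  have ej := seg_idx k0 (introT andP (conj h3 h4)).
  have ij : i = j by apply: val_inj; rewrite /= -ei -ej.
  by move: st; rewrite ij eqxx.
- move=> [h _]; have := blocks_leaves tb h.
  by case: (blocks_center sb) => ->; rewrite ?hu ?hv; lia.
Qed.

Lemma blocks_cover c (l : 'I_n) : (c = u \/ c = v) -> p <= l ->
  [exists s in blocks, [set c; l] \in star_edges s].
Proof.
move=> hc hl.
have hi : (l - p) %/ k < q by rewrite ltn_divLR //; have := ltn_ord l; lia.
apply/existsP; exists (bf (c == v, Ordinal hi)); apply/andP; split.
  by apply/imsetP; exists (c == v, Ordinal hi).
apply/imsetP; exists l.
  rewrite inE /=; have := divn_eq (l - p) k; have := ltn_pmod (l - p) k0; lia.
by case: hc => ->; rewrite ?eqxx //; case: eqP => // /(congr1 val); rewrite hu hv.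
Qed.

Lemma blocks_ncov s : s \in blocks -> [set u; v] \notin star_edges s.
Proof.
move=> sb; apply/negP => /imsetP [l ls E].
have : l \in [set u; v] by rewrite E set22.
move=> /set2P h; have := blocks_leaves sb ls.
by case: h => ->; rewrite ?hu ?hv; lia.
Qed.

End Blocks.

Lemma part1 n k : 2 <= k -> 1 < n -> n %% k != 1 ->
  exists A : {set star n},
    [/\ partial_kstar_design k A, #|A| = 2 * ((n - 2) %/ k) & ~ completable k A].
Proof.
move=> hk hn hmod.
have k0 : 0 < k by lia.
set p := (n - 2) %% k + 2; set q := (n - 2) %/ k.
have hpq : p + q * k = n by rewrite /p /q; have := divn_eq (n - 2) k; lia.
have hr : (n - 2) %% k != k - 1.
  apply: contra hmod => /eqP e.
  have -> : n = ((n - 2) %/ k).+1 * k + 1.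
    by have := divn_eq (n - 2) k; rewrite e mulSn; lia.
  by rewrite modnMDl modn_small.
have hpk : p <= k by rewrite /p; have := ltn_pmod (n - 2) k0; lia.
pose u : 'I_n := Ordinal (ltnW hn); pose v : 'I_n := Ordinal hn.
have p2 : 2 <= p by rewrite /p; lia.
have hu : val u = 0 by []. have hv : val v = 1 by [].
exists (blocks p k q u v); split.
- split; [exact: (blocks_kstar k0 hu hv p2 hpq) | exact: (blocks_disj k0 hu hv p2 hpq)].
- exact: (card_blocks k0 hu hv p2 hpq).
- have Fb c : c = u \/ c = v -> #|free_at (blocks p k q u v) c| < k.
    move=> hc.
    have cl : c < p by case: hc => ->; rewrite ?hu ?hv; lia.
    apply: (@leq_trans (#|seg n 0 p :\ c|).+1).
      rewrite ltnS; apply: subset_leq_card; apply/subsetP => l.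
      rewrite !inE => /andP [lc nc]; rewrite lc /=.
      case: (leqP p l) => // hl.
      by rewrite (blocks_cover k0 hu hv p2 hpq hc hl) in nc.
    rewrite card_segD1 //; try lia.
  apply: (@key _ _ _ u v).
  + by rewrite -(inj_eq val_inj) hu hv.

  + exact: (blocks_ncov k0 hu hv p2 hpq).
  + by apply: Fb; left.
  + by apply: Fb; right.
Qed.

Lemma part2 n k : 2 <= k -> 1 < n -> n %% k == 1 ->
  exists A : {set star n},
    [/\ partial_kstar_design k A, #|A| = (2 * n - 2) %/ k - 1 & ~ completable k A].
Proof.
move=> hk hn /eqP hmod.
have k0 : 0 < k by lia.
set m := n %/ k.
have hnm : n = m * k + 1 by rewrite {1}(divn_eq n k) hmod.
have m0 : 0 < m by case: m hnm => [|m'] //; lia.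
have hmk : k <= m * k by rewrite leq_pmull.
set p := k + 1; set q := m - 1.
have hpq : p + q * k = n by rewrite /p /q mulnBl mul1n; lia.
pose u : 'I_n := Ordinal (ltnW hn); pose v : 'I_n := Ordinal hn.
have p2 : 2 <= p by rewrite /p; lia.
have hu : val u = 0 by []. have hv : val v = 1 by [].
have hkn : k < n by lia.
pose wc : 'I_n := Ordinal hkn.
pose w : star n := (wc, seg n 0 k).
have Bl := blocks_leaves k0 hu hv p2 hpq.
have Bc := @blocks_center n p k q u v.
have wnb t : t \in blocks p k q u v -> (wc \notin t.2) /\ (t.1 != wc).
  move=> tb; split.
    by apply/negP => /Bl -/(_ tb); rewrite /p /=; lia.
  by case: (Bc t tb) => ->; rewrite -(inj_eq val_inj) /= ?hu ?hv; lia.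
have wA : w \notin blocks p k q u v.
  by apply/negP => /wnb [_]; rewrite eqxx.
exists (w |: blocks p k q u v); split.
- split.
  + move=> s /setU1P [->|sb]; last exact: (blocks_kstar k0 hu hv p2 hpq).
    apply/andP; split; first by rewrite card_seg //; lia.
    by rewrite inE /=; lia.
  + move=> s t /setU1P [->|sb] /setU1P [->|tb] st.
    * by rewrite eqxx in st.
    * apply: disj_star => /=.
        by move=> e; have [_] := wnb t tb; rewrite -e eqxx.
      by move=> [h _]; have [] := wnb t tb; rewrite h.
    * apply: disj_star => /=.
        by move=> e; have [_] := wnb s sb; rewrite e eqxx.
      by move=> [_ h]; have [] := wnb s sb; rewrite h.
    * exact: (blocks_disj k0 hu hv p2 hpq).
- rewrite cardsU1 wA (card_blocks k0 hu hv p2 hpq).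
  have -> : 2 * n - 2 = (2 * m) * k by rewrite hnm; lia.
  rewrite mulnK //; rewrite /q; lia.
- have Fb c : c = u \/ c = v -> #|free_at (w |: blocks p k q u v) c| < k.
    move=> hc.
    have cl : c < 2 by case: hc => ->; rewrite ?hu ?hv.
    apply: (@leq_trans (#|seg n 0 k :\ c|).+1).
      rewrite ltnS; apply: subset_leq_card; apply/subsetP => l.
      rewrite !inE => /andP [lc nc]; rewrite lc /=.
      case: (leqP p l) => hl.
        have := blocks_cover k0 hu hv p2 hpq hc hl => /existsP [s /andP [sb es]].
        move: nc => /existsP []; exists s; rewrite es andbT.
        by apply/setU1P; right.
      case: (ltnP l k) => // hl2.
      have lw : l = wc by apply: val_inj => /=; rewrite /p in hl; lia.
      move: nc => /existsP []; exists w; rewrite setU11 /=.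
      apply/imsetP; exists c; first by rewrite inE /=; lia.
      by rewrite lw setUC.
    rewrite card_segD1 //; try lia.
  apply: (@key _ _ _ u v).
  + by rewrite -(inj_eq val_inj) hu hv.
  + move=> s /setU1P [->|sb]; last exact: (blocks_ncov k0 hu hv p2 hpq).
    apply/negP => /imsetP [l _ E].
    have : wc \in [set u; v] by rewrite E set21.
    by move=> /set2P [] /(congr1 val) /=; rewrite ?hu ?hv; lia.
  + by apply: Fb; left.
  + by apply: Fb; right.
Qed.

Theorem lemma3 (k : nat) (hk : 2 <= k) :
  (forall n : nat, k_admissible k n -> 1 < n -> n %% k != 1 ->
     exists A : {set star n},
       [/\ partial_kstar_design k A, #|A| = 2 * ((n - 2) %/ k) & ~ completable k A]) /\
  (forall n : nat, k_admissible k n -> 1 < n -> n %% k == 1 ->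
     exists A : {set star n},
       [/\ partial_kstar_design k A, #|A| = (2 * n - 2) %/ k - 1 & ~ completable k A]).
Proof.
split=> n _; [exact: part1 | exact: part2].
Qed.
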